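(* Let $q$ be a prime power, $1\le\ell\le q$ an integer, and $\omega_1,\omega_2\in(0,1-\ell/q)$. Let $A,B,T\subseteq\mathbb{F}_q$ each have size $\ell$, and let $X_1\sim\mathrm{Unif}(A)$, $X_2\sim\mathrm{Unif}(B)$, $Y_1\sim\mathrm{Unif}(\mathbb{F}_q\setminus A)$, $Y_2\sim\mathrm{Unif}(\mathbb{F}_q\setminus B)$ be independent. Then $$(1-\omega_1)(1-\omega_2)\Pr[X_1+X_2\in T]+\omega_1(1-\omega_2)\Pr[X_1+Y_2\in T]+\omega_2(1-\omega_1)\Pr[Y_1+X_2\in T]+\omega_1\omega_2\Pr[Y_1+Y_2\in T]$$ $$\le(1-\omega_1)(1-\omega_2)+\omega_1\omega_2\cdot\frac{\ell}{q-\ell}.$$ *)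

(* Defs.v *)
From HB Require Import structures.
From mathcomp Require Import all_boot all_order all_algebra all_field.
Set Implicit Arguments. Unset Strict Implicit. Unset Printing Implicit Defensive.
Import Order.TTheory GRing.Theory Num.Theory.
Local Open Scope ring_scope.

Definition unif (F : finFieldType) (R : realFieldType) (S : {set F}) (x : F) : R :=
  if x \in S then (#|S|%:R)^-1 else 0.

(* Pr[X + Y \in T] where X ~ Unif(S1), Y ~ Unif(S2) are independent:
   the joint law of (X, Y) is the product of the marginals. *)
Definition prob_sum_in (F : finFieldType) (R : realFieldType)
    (S1 S2 T : {set F}) : R :=
  \sum_(x : F) \sum_(y : F) unif R S1 x * unif R S2 y * (x + y \in T)%:R.

(* Main.v *)
Require Import Defs.
From HB Require Import structures.
From mathcomp Require Import all_boot all_order all_algebra all_field.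
From mathcomp Require Import ring lra.
Import Order.TTheory GRing.Theory Num.Theory.
Local Open Scope ring_scope.

Section Aux.
Variables (F : finFieldType) (R : realFieldType) (T : {set F}).

Definition K (f g : F -> R) : R :=
  \sum_(x : F) \sum_(y : F) f x * g y * (x + y \in T)%:R.

Lemma sum_ind (S : {set F}) : \sum_(y : F) ((y \in S)%:R : R) = #|S|%:R.
Proof.
transitivity (\sum_(y in S) (1:R)); last by rewrite sumr_const.
rewrite [RHS]big_mkcond; apply: eq_bigr => y _; by case: (y \in S).
Qed.

Lemma sum_shift (x : F) : \sum_(y : F) ((x + y \in T)%:R : R) = #|T|%:R.
Proof.
rewrite -sum_ind (reindex_inj (addrI (- x))) /=.
by apply: eq_bigr => y _; rewrite addrA subrr add0r.
Qed.

Lemma sum_shift' (y : F) : \sum_(x : F) ((x + y \in T)%:R : R) = #|T|%:R.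
Proof. rewrite -(sum_shift y); apply: eq_bigr => x _; by rewrite addrC. Qed.

Lemma K1r f : K f (fun _ => 1) = #|T|%:R * \sum_x f x.
Proof.
rewrite /K mulr_sumr; apply: eq_bigr => x _.
rewrite -(sum_shift x) mulr_suml; apply: eq_bigr => y _; ring.
Qed.

Lemma K1l g : K (fun _ => 1) g = #|T|%:R * \sum_y g y.
Proof.
rewrite /K exchange_big mulr_sumr; apply: eq_bigr => y _.
rewrite -(sum_shift' y) mulr_suml; apply: eq_bigr => x _; ring.
Qed.

Lemma KBr f g : K f (fun y => 1 - g y) = K f (fun _ => 1) - K f g.
Proof.
rewrite /K -sumrB; apply: eq_bigr => x _; rewrite -sumrB; apply: eq_bigr => y _; ring.
Qed.

Lemma KBl f g : K (fun x => 1 - f x) g = K (fun _ => 1) g - K f g.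
Proof.
rewrite /K -sumrB; apply: eq_bigr => x _; rewrite -sumrB; apply: eq_bigr => y _; ring.
Qed.

Lemma eq_K f f2 g g2 : (forall x, f x = f2 x) -> (forall y, g y = g2 y) ->
  K f g = K f2 g2.
Proof.
move=> hf hg; apply: eq_bigr => x _; apply: eq_bigr => y _; by rewrite hf hg.
Qed.

Lemma K_ge0 f g : (forall x, 0 <= f x) -> (forall y, 0 <= g y) -> 0 <= K f g.
Proof.
move=> hf hg; apply: sumr_ge0 => x _; apply: sumr_ge0 => y _.
by rewrite !mulr_ge0.
Qed.

Lemma indC (S : {set F}) x : ((x \in ~: S)%:R : R) = 1 - (x \in S)%:R.
Proof. rewrite in_setC; case: (x \in S) => /=; ring. Qed.

Lemma probE (S1 S2 : {set F}) : prob_sum_in R S1 S2 T =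
  (#|S1|%:R)^-1 * (#|S2|%:R)^-1 * K (fun x => (x \in S1)%:R) (fun y => (y \in S2)%:R).
Proof.
rewrite /prob_sum_in /K mulr_sumr; apply: eq_bigr => x _.
rewrite mulr_sumr; apply: eq_bigr => y _; rewrite /unif.
case: (x \in S1); case: (y \in S2) => /=; ring.
Qed.

End Aux.

Theorem lemma4p2 (F : finFieldType) (R : realFieldType) (l : nat)
  (w1 w2 : R) (A B T : {set F}) :
  (1 <= l)%N -> (l <= #|F|)%N ->
  0 < w1 -> w1 < 1 - l%:R / #|F|%:R ->
  0 < w2 -> w2 < 1 - l%:R / #|F|%:R ->
  #|A| = l -> #|B| = l -> #|T| = l ->
  (1 - w1) * (1 - w2) * prob_sum_in R A B T
  + w1 * (1 - w2) * prob_sum_in R A (~: B) T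
  + w2 * (1 - w1) * prob_sum_in R (~: A) B T
  + w1 * w2 * prob_sum_in R (~: A) (~: B) T
  <= (1 - w1) * (1 - w2) + w1 * w2 * (l%:R / (#|F| - l)%:R).
Proof.
move=> l1 lq w1p w1q w2p w2q cA cB cT.
have cAc : #|~: A| = (#|F| - l)%N by rewrite cardsCs setCK cA.
have cBc : #|~: B| = (#|F| - l)%N by rewrite cardsCs setCK cB.
rewrite !probE cA cB cAc cBc.
set fA := (fun x => _); set fB := (fun y => _).
have hA : forall x, ((x \in ~: A)%:R : R) = 1 - fA x by move=> x; rewrite indC.
have hB : forall x, ((x \in ~: B)%:R : R) = 1 - fB x by move=> x; rewrite indC.
rewrite (@eq_K F R T _ (fun x => 1 - fA x) fB fB hA (fun _ => erefl)).
rewrite (@eq_K F R T fA fA _ (fun x => 1 - fB x) (fun _ => erefl) hB).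
rewrite (@eq_K F R T _ (fun x => 1 - fA x) _ (fun x => 1 - fB x) hA hB).

rewrite !KBr !KBl !K1r !K1l.
have sA : \sum_x fA x = l%:R by rewrite /fA sum_ind cA.
have sB : \sum_x fB x = l%:R by rewrite /fB sum_ind cB.
have s1 : \sum_(x : F) (1 : R) = #|F|%:R by rewrite sumr_const.
have hle : K F R T fA fB <= l%:R * l%:R.
  have := @K_ge0 F R T fA (fun y => 1 - fB y).
  rewrite KBr K1r sA cT subr_ge0; apply.
    by move=> x; rewrite /fA ler0n.
  by move=> y; rewrite /fB; case: (y \in B); rewrite /= ?subrr ?subr0.
rewrite sA sB s1 cT.
have lq' : (l < #|F|)%N.
  rewrite ltn_neqAle lq andbT; apply/eqP => e.
  move: w1q; rewrite -e divff ?subrr; first by move=> h; lra.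
  by rewrite pnatr_eq0 -lt0n.
set a := K F R T fA fB.
set L : R := l%:R.
set M : R := (#|F| - l)%:R.
have eF : (#|F|%:R : R) = L + M by rewrite /L /M -natrD subnKC // ltnW.
rewrite eF in w1q w2q *.
have hL : 0 < L by rewrite /L ltr0n.
have hM : 0 < M by rewrite /M ltr0n subn_gt0.
have c1p : 0 < (1 - w1) / L - w1 / M.
  have h : w1 * (L + M) < M.
    have h2 : (1 - L / (L + M)) * (L + M) = M by field; lra.
    rewrite -[X in _ < X]h2 ltr_pM2r //; lra.
  have -> : (1 - w1) / L - w1 / M = (M - w1 * (L + M)) / (L * M) by field; lra.
  by apply: divr_gt0; [lra | apply: mulr_gt0].
have c2p : 0 < (1 - w2) / L - w2 / M.
  have h : w2 * (L + M) < M.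
    have h2 : (1 - L / (L + M)) * (L + M) = M by field; lra.
    rewrite -[X in _ < X]h2 ltr_pM2r //; lra.
  have -> : (1 - w2) / L - w2 / M = (M - w2 * (L + M)) / (L * M) by field; lra.
  by apply: divr_gt0; [lra | apply: mulr_gt0].
have hP : 0 <= ((1 - w1) / L - w1 / M) * ((1 - w2) / L - w2 / M) * (L * L - a).
  by apply: mulr_ge0; [apply: mulr_ge0; apply: ltW | rewrite subr_ge0].
set P := _ * _ * (L * L - a) in hP.
have E : (1 - w1) * (1 - w2) * (L^-1 / L * a) +
  w1 * (1 - w2) * (L^-1 / M * (L * L - a)) +
  w2 * (1 - w1) * (M^-1 / L * (L * L - a)) +
  w1 * w2 * (M^-1 / M * (L * (L + M) - L * L - (L * L - a))) =
  (1 - w1) * (1 - w2) + w1 * w2 * (L / M) - P.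
  by rewrite /P; field; lra.
rewrite E; lra.
Qed.
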